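(* Let $f$ be a $k$-ary constraint. For any $1\le d\le\deg(f)$ there exists a $d$-ary constraint $g$ expressible by $f$ with constants such that its characteristic polynomial $P_g$ has degree exactly $d$, i.e., its coefficient at the monomial $x_1x_2\cdots x_d$ is non-zero.
   Context: A $k$-ary constraint is $f\colon\{0,1\}^k\to\{0,1\}$. Its characteristic polynomial $P_f$ is the unique multilinear polynomial over $\mathbb{R}$ in $k$ variables with $P_f(x)=f(x)$ for all $x\in\{0,1\}^k$; $\deg(f)=\deg(P_f)$. A $d$-ary constraint $g$ is expressible by $f$ with constants if $g(x_1,\dots,x_d)=f(\xi_1,\dots,\xi_k)$ identically, where each $\xi_j$ is either a variable $x_i$ for some $i\in[d]$ or one of the constants $0,1$. *)

(* Defs.v *)
From mathcomp Require Import all_boot all_order all_algebra.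
From mathcomp Require Import mpoly.
Set Implicit Arguments. Unset Strict Implicit. Unset Printing Implicit Defensive.
Import GRing.Theory.
Local Open Scope ring_scope.

Definition constraint (k : nat) := {ffun 'I_k -> bool} -> bool.

(* A polynomial over R = rat (a subfield of R; the interpolating multilinear
   polynomial has rational coefficients) is multilinear if every monomial
   in its support has all exponents <= 1. *)
Definition multilinear (k : nat) (p : {mpoly rat[k]}) : Prop :=
  forall m, m \in msupp p -> forall i : 'I_k, (m i <= 1)%N.

Definition is_char_poly (k : nat) (f : constraint k) (p : {mpoly rat[k]}) : Prop :=
  multilinear p /\
  forall x : {ffun 'I_k -> bool}, p.@[fun i => ((x i : nat)%:R : rat)] = ((f x : nat)%:R : rat).

(* deg f = total degree of P_f; msize p = deg p + 1 (and 0 for p = 0). *)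
Definition deg_poly (k : nat) (p : {mpoly rat[k]}) : nat := (msize p).-1.

Definition subst_input (d k : nat) (xi : 'I_k -> 'I_d + bool)
  (x : {ffun 'I_d -> bool}) : {ffun 'I_k -> bool} :=
  [ffun j => match xi j with inl i => x i | inr b => b end].

Definition expressible (d k : nat) (g : constraint d) (f : constraint k) : Prop :=
  exists xi : 'I_k -> 'I_d + bool, forall x, g x = f (subst_input xi x).

Definition full_monomial (d : nat) : 'X_{1..d} := [multinom (1%N) | i < d].

(* Main.v *)
Require Import Defs.
From mathcomp Require Import all_boot all_order all_algebra.
From mathcomp Require Import mpoly.
From mathcomp Require Import zify.
Set Implicit Arguments. Unset Strict Implicit. Unset Printing Implicit Defensive.
Import GRing.Theory Num.Theory.
Local Open Scope ring_scope.

Section S.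
Variable n : nat.
Implicit Types A B U V : {set 'I_n}.

Lemma alt0 A B : A \subset B -> A != B ->
  \sum_(V : {set 'I_n} | (A \subset V) && (V \subset B)) (-1) ^+ #|V| = 0 :> rat.
Proof.
move=> AB neAB.
have [j jB jA] : exists2 j, j \in B & j \notin A.
  have: ~~ (B \subset A) by apply: contra neAB => BA; rewrite eqEsubset AB BA.
  by case/subsetPn=> j jB jA; exists j.
pose s V := if j \in V then V :\ j else j |: V.
have sK : involutive s.
  move=> V; rewrite /s; have [jV|jV] := boolP (j \in V).
    by rewrite setD11 setD1K.
  by rewrite setU11 setU1K.
set S := (X in X = 0).
have : S = - S.
  rewrite {1}/S (reindex_inj (inv_inj sK)) /= -sumrN.
  apply: eq_big => V.
    rewrite /s; case: ifP => jV.
      apply/andP/andP => -[h1 h2]; split.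
      - by apply/subsetP => x xA; move/subsetP: h1 => /(_ x xA); rewrite !inE => /andP[].
      - apply/subsetP => x xV; case: (eqVneq x j) => [->//|xj].
        by apply: (subsetP h2); rewrite !inE xj.
      - apply/subsetP => x xA; rewrite !inE (subsetP h1 x xA) andbT.
        by apply: contraNneq jA => <-.
      - by apply/subsetP => x; rewrite !inE => /andP[_ /(subsetP h2)].
    apply/andP/andP => -[h1 h2]; split.
    - apply/subsetP => x xA; move: (subsetP h1 x xA); rewrite !inE => /orP[/eqP xj|//].
      by move: jA; rewrite -xj xA.
    - by apply/subsetP => x xV; apply: (subsetP h2); rewrite !inE xV orbT.
    - by apply: subset_trans h1 (subsetUr _ _).
    - by apply/subsetP => x; rewrite !inE => /orP[/eqP ->|/(subsetP h2)].
  move=> _; rewrite /s; case: ifP => jV.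
    by rewrite [in RHS](cardsD1 j V) jV exprS mulN1r opprK.
  by rewrite cardsU1 jV exprS mulN1r.
move=> h; have : 2%:R * S = 0 by rewrite mulr_natl mulr2n {2}h subrr.
by move/eqP; rewrite mulf_eq0 pnatr_eq0 /= => /eqP.
Qed.

Definition mob (h : {set 'I_n} -> rat) U :=
  \sum_(V : {set 'I_n} | V \subset U) (-1) ^+ (#|U| + #|V|) * h V.
Definition ind V : {ffun 'I_n -> bool} := [ffun i => i \in V].
Definition mset V : 'X_{1..n} := [multinom ((i \in V) : nat) | i < n].
Definition supp (m : 'X_{1..n}) : {set 'I_n} := [set i | (0 < m i)%N].
Definition pt V : 'I_n -> rat := fun i => ((ind V i : nat)%:R).

Lemma supp_mset U : supp (mset U) = U.
Proof. by apply/setP => i; rewrite inE mnmE; case: (i \in U). Qed.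

Lemma mset_inj : injective mset.
Proof. by move=> A B h; rewrite -(supp_mset A) h supp_mset. Qed.

Lemma ml_mset (p : {mpoly rat[n]}) m : multilinear p -> m \in msupp p -> m = mset (supp m).
Proof.
move=> ml ms; apply/mnmP => i; rewrite mnmE inE.
by move: (ml m ms i); case: (m i) => [|[|]].
Qed.

Lemma evalX m V : 'X_[m].@[pt V] = ((supp m \subset V) : nat)%:R.
Proof.
rewrite mevalX; case: (boolP (supp m \subset V)) => h.
  rewrite big1 // => i _; rewrite /pt ffunE.
  case: (boolP (i \in V)) => iV; first by rewrite expr1n.
  have : i \notin supp m by apply: contra iV; apply: (subsetP h).
  by rewrite inE -eqn0Ngt => /eqP ->.
case/subsetPn: h => i; rewrite inE => mi iV.
rewrite (bigD1 i) //= /pt ffunE (negbTE iV) expr0n.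
by rewrite eqn0Ngt mi mul0r.
Qed.

Lemma inner A U B :
  \sum_(V : {set 'I_n} | V \subset U) (-1) ^+ (#|B| + #|V|) * ((A \subset V) : nat)%:R
  = ((A == U) : nat)%:R * (-1) ^+ (#|B| + #|U|) :> rat.
Proof.
transitivity ((-1) ^+ #|B| * \sum_(V : {set 'I_n} | (A \subset V) && (V \subset U)) (-1) ^+ #|V| : rat).
  rewrite big_distrr [RHS]big_mkcond [LHS]big_mkcond; apply: eq_bigr => V _.
  by case: (A \subset V); case: (V \subset U); rewrite /= ?mulr0 ?mulr1 ?exprD.
case: (eqVneq A U) => [->|neAU].
  rewrite (big_pred1 U) ?mul1r ?exprD // => V /=.
  by rewrite eqEsubset andbC.
case: (boolP (A \subset U)) => AU; first by rewrite alt0 // mulr0 mul0r.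
rewrite big_pred0 ?mulr0 ?mul0r // => V.
apply: contraNF AU => /andP[h1 h2]; exact: subset_trans h1 h2.
Qed.

Lemma coef_mob (p : {mpoly rat[n]}) U : multilinear p ->
  p@_(mset U) = mob (fun V => p.@[pt V]) U.
Proof.
move=> ml.
rewrite /mob.
under eq_bigr => V _ do rewrite mevalE big_distrr.
rewrite exchange_big /= {1}(mpolyE p) raddf_sum /=.
apply: eq_big_seq => m ms.
rewrite mcoeffZ mcoeffX.
under eq_bigr => V _ do rewrite mulrCA -mevalX evalX.
rewrite -big_distrr /=; congr (_ * _).
rewrite inner {1}(ml_mset ml ms).
case: (eqVneq (supp m) U) => [->|ne].
  by rewrite eqxx mul1r addnn -mul2n exprM sqrrN !expr1n.
rewrite (_ : (mset (supp m) == mset U) = false) ?mul0r //.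
by apply/negbTE; apply: contra ne => /eqP/mset_inj ->.
Qed.


Definition interp (G : {set 'I_n} -> rat) : {mpoly rat[n]} :=
  \sum_(U : {set 'I_n}) mob G U *: 'X_[mset U].

Lemma interp_coef G W : (interp G)@_(mset W) = mob G W.
Proof.
rewrite /interp raddf_sum (bigD1 W) //= big1 ?addr0.
  by rewrite mcoeffZ mcoeffX eqxx mulr1.
move=> U ne; rewrite mcoeffZ mcoeffX.
rewrite (_ : (mset U == mset W) = false) ?mulr0 //.
by apply/negbTE; apply: contra ne => /eqP/mset_inj ->.
Qed.

Lemma interp_ml G : multilinear (interp G).
Proof.
move=> m; rewrite mcoeff_msupp /interp raddf_sum /= => nz i.
case: (boolP [exists U, mset U == m]) => [/existsP[U /eqP <-]|none].
  by rewrite mnmE; case: (i \in U).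
rewrite big1 ?eqxx // in nz => U _.
rewrite mcoeffZ mcoeffX.
rewrite (_ : (mset U == m) = false) ?mulr0 //.
by apply/negbTE; apply: contra none => h; apply/existsP; exists U.
Qed.

Lemma interp_eval G X : (interp G).@[pt X] = G X.
Proof.
rewrite /interp raddf_sum /=.
under eq_bigr => U _ do rewrite mevalZ evalX supp_mset /mob big_distrl /=.
rewrite (exchange_big_dep xpredT) //=.
transitivity (\sum_(V : {set 'I_n}) G V * ((V == X) : nat)%:R).
  apply: eq_bigr => V _.
  have e : (V == X : nat)%:R = (V == X : nat)%:R * (-1) ^+ (#|V| + #|X|) :> rat.
    by case: eqVneq => [->|]; rewrite ?mul1r ?mul0r // addnn -mul2n exprM sqrrN !expr1n.
  rewrite [in RHS]e -(inner V X V) big_distrr /=.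
  rewrite big_mkcond [RHS]big_mkcond /=; apply: eq_bigr => U _.
  by case: (V \subset U); case: (U \subset X); rewrite /= ?mulr0 ?mulr1 // addnC mulrC.
rewrite (bigD1 X) //= eqxx mulr1 big1 ?addr0 // => V /negbTE ->.
by rewrite mulr0.
Qed.

Lemma mdeg_mset U : mdeg (mset U) = #|U|.
Proof.
rewrite mdegE -sum1_card [RHS]big_mkcond /=; apply: eq_bigr => i _.
by rewrite mnmE; case: (i \in U).
Qed.


Lemma disjI (T W A C : {set 'I_n}) : T :&: W = set0 -> A \subset T -> C \subset W -> A :&: C = set0.
Proof. by move=> h AT CW; apply/eqP; rewrite -subset0 -h; apply: setISS. Qed.

Lemma cardsU0 A B : A :&: B = set0 -> #|A :|: B| = (#|A| + #|B|)%N.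
Proof. by move=> h; rewrite cardsU h cards0 subn0. Qed.

Lemma split_mob (h : {set 'I_n} -> rat) (T W : {set 'I_n}) : T :&: W = set0 ->
  mob h (T :|: W) = \sum_(C : {set 'I_n} | C \subset W)
     (-1) ^+ (#|W| + #|C|) * mob (fun V => h (V :|: C)) T.
Proof.
move=> TW; rewrite /mob.
under [RHS]eq_bigr => C _ do rewrite big_distrr /=.
rewrite pair_big_dep /=.
rewrite (reindex_onto (fun p : {set 'I_n} * {set 'I_n} => p.2 :|: p.1)
                      (fun V => (V :&: W, V :&: T))) /=; last first.
  by move=> V VTW; rewrite -setIUr (setIidPl VTW).
rewrite (eq_bigl (fun p : {set 'I_n} * {set 'I_n} => (p.1 \subset W) && (p.2 \subset T))); last first.
  move=> [C A] /=.
  apply/andP/andP => [[h1 /eqP [e1 e2]]|[CW AT]].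
    by split; [rewrite -e1 subsetIr | rewrite -e2 subsetIr].
  split; first by apply: setUSS.
  rewrite setIUl setIUl (setIidPl CW) (setIidPl AT).
  have e1 : A :&: W = set0 by apply: (disjI TW).
  have e2 : C :&: T = set0 by rewrite setIC; apply: (disjI TW).
  by rewrite e1 e2 set0U setU0.
apply: eq_bigr => -[C A] /= /andP[CW AT].
rewrite cardsU0 // cardsU0; last by apply: (disjI TW).
rewrite mulrA -exprD; congr (_ ^+ _ * _).
by rewrite addnACA addnC.
Qed.

End S.

Lemma mob_inj d k (e : 'I_d -> 'I_k) (F : {set 'I_k} -> rat) : injective e ->
  mob (fun V : {set 'I_d} => F (e @: V)) setT = mob F (e @: setT).
Proof.
move=> inj; rewrite /mob [RHS](reindex_onto (fun V : {set 'I_d} => e @: V) (fun U => e @^-1: U)) /=.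
  apply: eq_big => V.
    rewrite subsetT imsetS ?subsetT //=; apply/esym/eqP/setP => y.
    by rewrite inE mem_imset.
  by rewrite !card_imset.
move=> U UT; apply/setP => x; apply/imsetP/idP => [[y]|xU].
  by rewrite inE => yU ->.
have /imsetP [y _ xy] := subsetP UT x xU.
by exists y; rewrite // inE -xy.
Qed.

Lemma mob_ext n (h1 h2 : {set 'I_n} -> rat) U : h1 =1 h2 -> mob h1 U = mob h2 U.
Proof. by move=> e; apply: eq_bigr => V _; rewrite e. Qed.

Lemma msize_ml n (p : {mpoly rat[n]}) : multilinear p -> (msize p <= n.+1)%N.
Proof.
move=> ml; rewrite msizeE; apply/bigmax_leqP_seq => m ms _.
rewrite ltnS (ml_mset ml ms) mdeg_mset.
by apply: leq_trans (max_card _) _; rewrite card_ord.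
Qed.

Theorem lemma14 (k : nat) (f : constraint k) (Pf : {mpoly rat[k]}) :
  is_char_poly f Pf ->
  forall d : nat, (1 <= d)%N -> (d <= deg_poly Pf)%N ->
  exists (g : constraint d) (Pg : {mpoly rat[d]}),
    expressible g f /\ is_char_poly g Pg /\
    deg_poly Pg = d /\ Pg@_(full_monomial d) != 0.
Proof.
move=> [mlf evf] d d1 dD.
pose F : {set 'I_k} -> rat := fun V => ((f (ind V) : nat)%:R).
have coefF U : Pf@_(mset U) = mob F U.
  by rewrite coef_mob //; apply: mob_ext => V; rewrite /pt evf.
have [m ms dm] : exists2 m, m \in msupp Pf & (d <= mdeg m)%N.
  case: (boolP (has (fun m => d <= mdeg m)%N (msupp Pf))) => [/hasP[m ms dm]|]; first by exists m.
  move/hasPn => h; exfalso.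
  have : (msize Pf <= d)%N.
    by rewrite msizeE; apply/bigmax_leqP_seq => m' ms' _; rewrite ltnNge h.
  move: dD; rewrite /deg_poly; lia.
set S := supp m.
have mS : m = mset S by exact: (ml_mset mlf ms).
have dS : (d <= #|S|)%N by rewrite -mdeg_mset -mS.
have nzS : mob F S != 0 by rewrite -coefF -mS -mcoeff_msupp.
pose e (i : 'I_d) : 'I_k := enum_val (A := S) (widen_ord dS i).
have inj : injective e.
  by move=> i j /enum_val_inj /(congr1 val) /= h; apply: val_inj.
set T := e @: setT.
have TS : T \subset S.
  by apply/subsetP => x /imsetP[i _ ->]; apply: enum_valP.
set W := S :\: T.
have TW : T :&: W = set0.
  by apply/setP => x; rewrite !inE; case: (x \in T); rewrite ?andbF.
have STW : S = T :|: W.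
  apply/setP => x; rewrite !inE; case: (boolP (x \in T)) => xT //=.
  by move: (subsetP TS x xT); rewrite inE.
have [C CW nzC] : exists2 C : {set 'I_k}, C \subset W & mob (fun V => F (V :|: C)) T != 0.
  case: (boolP [exists C : {set 'I_k}, (C \subset W) && (mob (fun V => F (V :|: C)) T != 0)]).
    by case/existsP => C /andP[]; exists C.
  move/existsPn => h; move: nzS; rewrite STW split_mob // big1 ?eqxx // => C CW.
  by move: (h C); rewrite CW /= negbK => /eqP ->; rewrite mulr0.
pose xi (j : 'I_k) : 'I_d + bool :=
  if [pick i | e i == j] is Some i then inl i else inr (j \in C).
pose g : constraint d := fun x => f (subst_input xi x).
have subst V : subst_input xi (ind V) = ind (e @: V :|: C).
  apply/ffunP => j; rewrite !ffunE /xi; case: pickP => [i /eqP <-|none].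
    rewrite inE mem_imset //.
    have -> : (e i \in C) = false.
      apply/negbTE; apply/negP => /(subsetP CW); rewrite !inE.
      by rewrite (mem_imset _ _ inj) in_setT.
    by rewrite orbF ffunE.
  rewrite in_setU (_ : j \in e @: V = false) //.
  by apply/negbTE; apply/imsetP => -[i _ ji]; move: (none i); rewrite ji eqxx.
pose G : {set 'I_d} -> rat := fun V => ((g (ind V) : nat)%:R).
have fullE : full_monomial d = mset setT by apply/mnmP => i; rewrite !mnmE inE.
have nzG : (interp G)@_(full_monomial d) != 0.
  rewrite fullE interp_coef.
  rewrite (mob_ext _ (h2 := fun V => (fun U => F (U :|: C)) (e @: V))); last first.
    by move=> V; rewrite /G /g subst.
  by rewrite (mob_inj (fun U => F (U :|: C)) inj).
exists g, (interp G); split; first by exists xi.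
split.
  split; first exact: interp_ml.
  move=> x; have -> : x = ind [set i | x i] by apply/ffunP => i; rewrite ffunE inE.
  exact: interp_eval.
split=> //.
have h1 := msize_ml (@interp_ml _ G).
have : mset setT \in msupp (interp G) by rewrite mcoeff_msupp -fullE.
move/msize_mdeg_lt; rewrite mdeg_mset cardsT card_ord => h2.
rewrite /deg_poly; lia.
Qed.
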